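(* Let $q\ge2$, $G\in\mathbb G^q$ and $S=\Psi(G)$. Let $w$ be a white vertex of $S$ and suppose some edge $e$ incident to $w$ is a bridge of $S$ such that the connected component of $S\setminus e$ not containing $w$ is a tree. Then $w$ is admissible.
   Context: Fix an integer $q\ge 2$. A $(q+1)$-edge-colored graph (colored graph) is a finite connected graph, multiple edges allowed and no loops, whose edges carry colors in $\{0,1,\dots,q\}$ such that every vertex is incident to exactly one edge of each color. It is rooted if one color-0 edge is distinguished and oriented; it is bipartite if its vertices can be colored black and white so that every edge joins a black and a white vertex, with the convention that the origin of the root edge is black. $\mathbb G^q$ denotes the set of rooted bipartite colored graphs. Constellations: given $G\in\mathbb G^q$, its constellation $S=\Psi(G)$ is obtained as follows: orient every edge from its black to its white endpoint; contract every color-0 edge into a single vertex, called a white vertex of $S$ (the one coming from the root edge is the root vertex). For each $i\in\{1,\dots,q\}$ the color-$i$ edges now form directed cycles; for each such cycle, passing through white vertices $w_1,\dots,w_p$ in this cyclic order, add a new vertex of color $i$ joined by one color-$i$ edge to each $w_k$, equip the new vertex with the cyclic order $(w_1,\dots,w_p)$ of its incident edges, and delete the original color-$i$ edges of the cycle. $\Psi$ is a bijection from $\mathbb G^q$ onto the set of resulting objects ($q$-constellations). A white vertex $w$ of $S=\Psi(G)$ is admissible if the two endpoints of the color-0 edge of $G$ contracted to $w$ are joined in $G$ by a path containing no color-0 edge. *)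

(* Defs.v *)
From mathcomp Require Import all_boot.
Set Implicit Arguments. Unset Strict Implicit. Unset Printing Implicit Defensive.

Section SimpleGraph.
Variable T : finType.

Definition remove_edge (r : rel T) (a b : T) : rel T :=
  fun x y => r x y && ~~ (((x == a) && (y == b)) || ((x == b) && (y == a))).

(* {a,b} is a bridge: an edge whose deletion disconnects its endpoints,
   i.e. increases the number of connected components *)
Definition is_bridge (r : rel T) (a b : T) : Prop :=
  r a b /\ ~ connect (remove_edge r a b) a b.

Definition induced (r : rel T) (A : {set T}) : rel T :=
  fun x y => [&& r x y, x \in A & y \in A].

Definition has_cycle (r : rel T) : Prop :=
  exists (x : T) (p : seq T),
    [/\ uniq (x :: p), 2 <= size p, path r x p & r (last x p) x].

Definition is_tree (r : rel T) (A : {set T}) : Prop :=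
  [/\ A != set0,
      (forall x y, x \in A -> y \in A -> connect (induced r A) x y)
    & ~ has_cycle (induced r A)].
End SimpleGraph.

(* ---------- (q+1)-edge-colored graphs ----------
   Since every vertex is incident to exactly one edge of each color, a
   colored graph on vertex set V is the same as a family of fixed-point-free
   involutions sigma i (i = 0..q): sigma i v is the other endpoint of the
   color-i edge at v (no loops = fixed-point-free). *)

Definition Grel (q : nat) (V : finType) (sigma : 'I_q.+1 -> V -> V) : rel V :=
  fun x y => [exists i : 'I_q.+1, sigma i x == y].

Definition Grel_nonzero (q : nat) (V : finType) (sigma : 'I_q.+1 -> V -> V) : rel V :=
  fun x y => [exists i : 'I_q.+1, (i != ord0) && (sigma i x == y)].

Definition colored_graph (q : nat) (V : finType) (sigma : 'I_q.+1 -> V -> V) : Prop :=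
  [/\ forall i, involutive (sigma i),
      forall i v, sigma i v != v
    & forall x y, connect (Grel sigma) x y].

(* rooted bipartite colored graph: root is the (black) origin of the
   distinguished color-0 edge {root, sigma 0 root}; black is the
   bipartition (true = black) *)
Definition rooted_bipartite (q : nat) (V : finType) (sigma : 'I_q.+1 -> V -> V)
    (root : V) (black : V -> bool) : Prop :=
  [/\ colored_graph sigma, black root
    & forall i v, black (sigma i v) = ~~ black v].

(* ---------- The constellation S = Psi(G) ----------
   White vertices of S = color-0 edges of G, each indexed by its black
   endpoint u (vertex inl u, u black).  After contracting color-0 edges and
   orienting edges black -> white, the color-i edges (i >= 1) form the
   directed cycles of the permutation phi i = sigma 0 \o sigma i on black
   vertices; the color-i vertex of S for such a cycle is inr (i, C) where C
   is the set of (black indices of) white vertices on the cycle.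
   Elements of the vertex type not of this form are isolated dummies. *)

Definition phi (q : nat) (V : finType) (sigma : 'I_q.+1 -> V -> V) (i : 'I_q.+1) : V -> V :=
  fun v => sigma ord0 (sigma i v).

Definition cyc (q : nat) (V : finType) (sigma : 'I_q.+1 -> V -> V) (i : 'I_q.+1) (u : V)
  : {set V} := [set v | fconnect (phi sigma i) u v].

Definition Svert (q : nat) (V : finType) : finType :=
  (V + ('I_q.+1 * {set V}))%type.

Definition Sadj (q : nat) (V : finType) (sigma : 'I_q.+1 -> V -> V) (black : V -> bool)
  : rel (Svert q V) :=
  fun x y =>
    match x, y with
    | inl u, inr (i, C) => [&& black u, i != ord0 & C == cyc sigma i u]
    | inr (i, C), inl u => [&& black u, i != ord0 & C == cyc sigma i u]
    | _, _ => false
    end.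

(* the white vertex of S indexed by black u is admissible: the endpoints
   u and sigma 0 u of the contracted color-0 edge are joined in G by a path
   using no color-0 edge *)
Definition admissible (q : nat) (V : finType) (sigma : 'I_q.+1 -> V -> V) (u : V) : Prop :=
  connect (Grel_nonzero sigma) u (sigma ord0 u).

(* Main.v *)
Require Import Defs.
From mathcomp Require Import all_boot.
Set Implicit Arguments. Unset Strict Implicit. Unset Printing Implicit Defensive.

Lemma Gnz_sym (q : nat) (V : finType) (sigma : 'I_q.+1 -> V -> V) :
  (forall i, involutive (sigma i)) -> symmetric (Grel_nonzero sigma).
Proof.
move=> inv x y; apply/existsP/existsP => -[i /andP[i0 /eqP <-]];
  exists i; rewrite i0 /= ?inv //.
Qed.

Lemma phi_inj (q : nat) (V : finType) (sigma : 'I_q.+1 -> V -> V) i :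
  (forall i, involutive (sigma i)) -> injective (phi sigma i).
Proof.
move=> inv x y; rewrite /phi => /(inv_inj (inv ord0)) /(inv_inj (inv i)) //.
Qed.

Lemma cyc_eq (q : nat) (V : finType) (sigma : 'I_q.+1 -> V -> V) i v w :
  (forall i, involutive (sigma i)) -> w \in cyc sigma i v -> cyc sigma i w = cyc sigma i v.
Proof.
move=> inv; rewrite inE => H; apply/setP => x; rewrite !inE.
have cs : connect_sym (frel (phi sigma i)) by move=> a b; apply: fconnect_sym; exact: phi_inj.
by rewrite (same_connect cs H).
Qed.

Lemma black_iter (q : nat) (V : finType) (sigma : 'I_q.+1 -> V -> V) (black : V -> bool) i n v :
  (forall i v, black (sigma i v) = ~~ black v) -> black (iter n (phi sigma i) v) = black v.
Proof.
move=> hb; elim: n => //= n IH; by rewrite /phi !hb negbK.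
Qed.

Lemma black_cyc (q : nat) (V : finType) (sigma : 'I_q.+1 -> V -> V) (black : V -> bool) i v w :
  (forall i v, black (sigma i v) = ~~ black v) -> w \in cyc sigma i v -> black w = black v.
Proof.
move=> hb; rewrite inE => /iter_findex <-; exact: black_iter.
Qed.

Lemma keyL (q : nat) (V : finType) (sigma : 'I_q.+1 -> V -> V) (j : 'I_q.+1) v :
  (forall i, involutive (sigma i)) -> j != ord0 ->
  (forall w, w \in cyc sigma j v -> w != v -> connect (Grel_nonzero sigma) w (sigma ord0 w)) ->
  connect (Grel_nonzero sigma) v (sigma ord0 v).
Proof.
move=> inv j0 H.
set f := phi sigma j.
have cs : connect_sym (Grel_nonzero sigma) by apply: sym_connect_sym; exact: Gnz_sym.
have edge x : Grel_nonzero sigma x (sigma j x) by apply/existsP; exists j; rewrite j0 eqxx.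
have sj x : sigma j x = sigma ord0 (f x) by rewrite /f /phi inv.
have claim m : m <= (order f v).-1 -> connect (Grel_nonzero sigma) v (iter m f v).
  elim: m => [|m IH] lt; first by rewrite connect0.
  apply: connect_trans (IH (ltnW lt)) _.
  apply: connect_trans (connect1 (edge _)) _.
  rewrite sj /= -/(iter m.+1 f v); rewrite cs; apply: H.
    by rewrite inE; apply: fconnect_iter.
  apply/eqP => E.
  have := findex_iter (i:=m.+1) (f:=f) (x:=v).
  rewrite E findex0 => /(_ _) h.
  suff: (0 = m.+1) by [].
  by apply: h; rewrite -orderSpred ltnS.
have := claim _ (leqnn _).
rewrite -/(finv f v) => h.
apply: connect_trans h _; apply: connect_trans (connect1 (edge _)) _.
by rewrite sj f_finv ?connect0 //; exact: phi_inj.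
Qed.

Lemma keyL' (q : nat) (V : finType) (sigma : 'I_q.+1 -> V -> V) (j : 'I_q.+1) v :
  (forall i, involutive (sigma i)) -> j != ord0 ->
  ~~ connect (Grel_nonzero sigma) v (sigma ord0 v) ->
  exists w, [/\ w \in cyc sigma j v, w != v & ~~ connect (Grel_nonzero sigma) w (sigma ord0 w)].
Proof.
move=> inv j0 nP.
case: (boolP [exists w, [&& w \in cyc sigma j v, w != v & ~~ connect (Grel_nonzero sigma) w (sigma ord0 w)]]).
  by case/existsP => w /and3P[a b c]; exists w.
rewrite negb_exists => /forallP Hf.
case/negP: nP; apply: keyL inv j0 _ => w a b.
by have := Hf w; rewrite a b /= negbK.
Qed.

Lemma Sadj_sym (q : nat) (V : finType) (sigma : 'I_q.+1 -> V -> V) (black : V -> bool) :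
  symmetric (Sadj sigma black).
Proof. by case=> [a|[i C]] [b|[j D]]. Qed.

Lemma remove_sym (T : finType) (r : rel T) a b : symmetric r -> symmetric (remove_edge r a b).
Proof.
move=> rs x y; rewrite /remove_edge rs.
by case: (x == a); case: (x == b); case: (y == a); case: (y == b); rewrite ?andbF ?andbT ?orbF.
Qed.

Lemma path_split (T : eqType) (e : rel T) z s s1 x s2 :
  path e z s -> z :: s = s1 ++ x :: s2 -> path e x s2 /\ last x s2 = last z s.
Proof.
move=> ps; case: s1 => [|a s1] /=.
  by case=> <- <-.
case=> ??; subst; move: ps; rewrite cat_path last_cat /= => /andP[_ /andP[_ ->]]; done.
Qed.

Lemma last_eqP (T : Type) (z y : T) s0 s1 : z :: s0 = rcons s1 y -> last z s0 = y.
Proof.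
case: s1 => [|a s1] /=; first by case=> -> ->.
by case=> -> ->; rewrite last_rcons.
Qed.

Lemma rcons2 (T : Type) (s1 : seq T) y a : s1 ++ [:: y; a] = rcons (rcons s1 y) a.
Proof. by rewrite -!cats1 -catA. Qed.

Theorem mainTheorem5 (q : nat) (hq : 2 <= q) (V : finType)
    (sigma : 'I_q.+1 -> V -> V) (root : V) (black : V -> bool)
    (hG : rooted_bipartite sigma root black)
    (u : V) (hu : black u) (z : Svert q V)
    (hbridge : is_bridge (Sadj sigma black) (inl u) z)
    (htree : is_tree (remove_edge (Sadj sigma black) (inl u) z)
                     [set y | connect (remove_edge (Sadj sigma black) (inl u) z) z y]) :
  admissible sigma u.
Proof.
case: hG => [[inv nofix conn] _ hb].
apply: contraT => nPu.
case: z hbridge htree => [w|[i C]] [e0 nce] [_ _ nocyc]; first by [].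
move: (e0) => /and3P[_ i0 /eqP hC].
set z := inr (i, C) in e0 nce nocyc *.
set r' := remove_edge (Sadj sigma black) (inl u) z in nce nocyc *.
set K := [set y | connect r' z y] in nocyc *.
set P := fun v => connect (Grel_nonzero sigma) v (sigma ord0 v).
have r'sym : symmetric r' by apply: remove_sym; exact: Sadj_sym.
have cs : connect_sym r' by exact: sym_connect_sym.
have uK : inl u \notin K.
  by rewrite inE; apply/negP; rewrite cs.
have whiteK v j : black v -> j != ord0 -> inl v \in K ->
    r' (inl v) (inr (j, cyc sigma j v)) && (inr (j, cyc sigma j v) \in K).
  move=> bv j0 vK.
  have vu : v != u by apply: contraNneq uK => <-.
  have rr : r' (inl v) (inr (j, cyc sigma j v)).
    rewrite /r' /remove_edge /= bv j0 eqxx /=.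
    by case: eqP => [[E]|] //; rewrite E eqxx in vu.
  rewrite rr /=; move: vK; rewrite !inE => vK; exact: connect_trans vK (connect1 rr).
have colK j w (y := inr (j, cyc sigma j w) : Svert q V) : black w -> j != ord0 -> y != z ->
    y \in K -> r' y (inl w) && (inl w \in K).
  move=> bw j0 yz yK.
  have rr : r' y (inl w).
    rewrite /r' /remove_edge /= bw j0 eqxx /=.
    by rewrite (negbTE yz).
  rewrite rr /=; move: yK; rewrite !inE => yK; exact: connect_trans yK (connect1 rr).
pose gp s v jc := [/\ uniq (z :: s), path (induced r' K) z s, black v, ~~ P v &
   inl v \in K /\ exists s0, s = rcons s0 (inl v) /\ last z s0 = inr (jc, cyc sigma jc v)].
have step s v jc : gp s v jc -> exists s' v' jc', gp s' v' jc' /\ size s < size s'.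
  case=> us ps bv nPv [vK [s0 [es ls0]]].
  have lq1 : 1 < q.+1 by apply: ltnW.
  have lq2 : 2 < q.+1 by exact: hq.
  pose j' : 'I_q.+1 := if jc == inord 1 then inord 2 else inord 1.
  have j'0 : j' != ord0.
    by rewrite /j'; case: ifP => _; apply/eqP => /(congr1 val); rewrite /= inordK.
  have j'c : j' != jc.
    rewrite /j'; case: ifP => [/eqP ->|/negbT]; last by rewrite eq_sym.
    by apply/eqP => /(congr1 val); rewrite /= !inordK.
  have /andP[ry yK] := whiteK v j' bv j'0 vK.
  set y := inr (j', cyc sigma j' v) in ry yK.
  have lastv : last z s = inl v by rewrite es last_rcons.
  have rvy : induced r' K (inl v) y by rewrite /induced ry vK yK.
  have ryv : induced r' K y (inl v) by rewrite /induced r'sym ry vK yK.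
  case yin: (y \in z :: s).
    exfalso; apply: nocyc.
    have [s1 [s2 E]] : exists s1 s2, z :: s = s1 ++ y :: s2.
      by case/splitPr: yin => s1 s2; exists s1, s2.
    have [p2 l2] := path_split ps E.
    have u2 : uniq (y :: s2) by move: us; rewrite E cat_uniq => /and3P[].
    exists y, s2; split => //; last by rewrite l2 lastv.
    case: s2 E p2 l2 u2 => [|a [|b s2]] E p2 l2 u2 //.
      by move: l2; rewrite lastv.
    move: l2; rewrite lastv /= => ea; subst a.
    move: E; rewrite es rcons2 -rcons_cons. move=> /rcons_inj [] E1.
    move: (last_eqP E1); rewrite ls0 /y => -[] ej _; by rewrite ej eqxx in j'c.
  have yz : y != z by apply: contraFneq yin => ->; rewrite mem_head.
  have [w [wC wv nPw]] := keyL' inv j'0 nPv.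
  have bw : black w by rewrite (black_cyc hb wC).
  have cw : cyc sigma j' w = cyc sigma j' v by apply: cyc_eq inv _.
  have /andP[rw wK] := colK j' w bw j'0 ltac:(by rewrite cw) ltac:(by rewrite cw).
  rewrite -/y cw in rw.
  have ryw : induced r' K y (inl w) by rewrite /induced rw yK wK.
  case win: (inl w \in z :: s).
    exfalso; apply: nocyc.
    have [s1 [s2 E]] : exists s1 s2, z :: s = s1 ++ inl w :: s2.
      by case/splitPr: win => s1 s2; exists s1, s2.
    have [p2 l2] := path_split ps E.
    have u2 : uniq (inl w :: s2) by move: us; rewrite E cat_uniq => /and3P[].
    have ys2 : y \notin inl w :: s2.
      by apply: contraFN yin; rewrite E mem_cat => ->; rewrite orbT.
    exists (inl w), (rcons s2 y); split.
    - by rewrite -rcons_cons rcons_uniq ys2.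
    - case: s2 {E p2 u2 ys2} l2 => [|a s2] l2.
        by move: l2; rewrite lastv /= => -[] ew; rewrite ew eqxx in wv.
      by rewrite size_rcons.
    - by rewrite rcons_path p2 l2 lastv.
    - by rewrite last_rcons.
  exists (rcons (rcons s y) (inl w)), w, j'; split; last by rewrite !size_rcons ltnS leqnSn.
  split => //.
  - rewrite -!rcons_cons !rcons_uniq us mem_rcons inE negb_or yin andbT.
    by rewrite win andbT.
  - by rewrite !rcons_path ps lastv rvy last_rcons.
  - split => //; exists (rcons s y); by rewrite last_rcons cw.
have bound n : forall s v jc, #|Svert q V| - size s <= n -> gp s v jc -> False.
  elim: n => [|n IH] s v jc hn g.
    case: g => us _ _ _ _.
    move/card_uniqP: us; have := max_card (mem (z :: s)) => /= + E; rewrite E.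
    by rewrite leqn0 subn_eq0 in hn; move=> h; have := leq_trans h hn; rewrite ltnn.
  have [s' [v' [jc' [g' lt]]]] := step _ _ _ g.
  apply: (IH _ _ _ _ g').
  rewrite leq_subLR; rewrite leq_subLR in hn.
  apply: leq_trans hn _; by rewrite addnS -addSn leq_add2r.
have [v1 [v1C v1u nP1]] := keyL' inv i0 nPu.
have bv1 : black v1 by rewrite (black_cyc hb v1C).
have cv1 : cyc sigma i v1 = C by rewrite hC; apply: cyc_eq inv _.
have zK : z \in K by rewrite inE connect0.
have [r1 v1K] : r' z (inl v1) /\ inl v1 \in K.
  have rr : r' z (inl v1).
    rewrite /r' /remove_edge /= bv1 i0 cv1 eqxx /=.
    rewrite eqxx /=; by case: eqP => [[E]|] //; rewrite E eqxx in v1u.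
  split => //; rewrite inE; exact: connect1.
exfalso; apply: (bound _ [:: inl v1] v1 i (leqnn _)).
split => //=.
- by rewrite /induced r1 zK v1K.
- by split => //; exists [::]; rewrite /= cv1.
Qed.
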